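(* Let $t(0)t(1)t(2)\cdots$ be the Thue–Morse sequence, and define $f:\mathbb{N}\times\mathbb{N}\to\{0,1\}$ by $f(i,j)=t(i+j)$. Then $f$ is frameless: there do not exist $m,n\ge0$ and $p,q\ge1$ such that $f(m,n+i)=f(m+p,n+i)$ for all $0\le i\le q$ and $f(m+j,n)=f(m+j,n+q)$ for all $0\le j\le p$.
   Context: $\mathbb{N}=\{0,1,2,\dots\}$. The Thue–Morse sequence is defined by $t(n)=$ the number of $1$ bits in the binary representation of $n$, taken modulo $2$ (so it begins $0110100110010110\cdots$). A picture frame in a coloring $f$ of $\mathbb{N}\times\mathbb{N}$ is a rectangular block $\{m,\dots,m+p\}\times\{n,\dots,n+q\}$ with $p,q\ge1$ whose first and last rows agree and whose first and last columns agree; $f$ is frameless if it has no picture frame. *)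

(* Defs.v *)
From mathcomp Require Import all_boot.
Set Implicit Arguments. Unset Strict Implicit. Unset Printing Implicit Defensive.

Fixpoint popcount_fuel (fuel n : nat) : nat :=
  match fuel with
  | 0 => 0
  | fuel'.+1 => if n is 0 then 0 else odd n + popcount_fuel fuel' n./2
  end.
Definition popcount (n : nat) : nat := popcount_fuel n n.

Definition thue_morse (n : nat) : bool := odd (popcount n).

Definition picture_frame {C : Type} (f : nat -> nat -> C) (m n p q : nat) : Prop :=
  1 <= p /\ 1 <= q /\
  (forall i, i <= q -> f m (n + i) = f (m + p) (n + i)) /\
  (forall j, j <= p -> f (m + j) n = f (m + j) (n + q)).

Definition frameless {C : Type} (f : nat -> nat -> C) : Prop :=
  ~ exists m n p q, picture_frame f m n p q.

(* Main.v *)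
Require Import Defs.
From mathcomp Require Import all_boot.
From mathcomp Require Import zify.

Lemma pf_fuel f g n : n <= f -> n <= g -> popcount_fuel f n = popcount_fuel g n.
Proof.
elim: f g n => [|f IH] [|g] [|n] //= Hf Hg.
congr (_ + _); apply: IH.
- by rewrite uphalfE leq_half_double -muln2; lia.
- by rewrite uphalfE leq_half_double -muln2; lia.
Qed.

Notation t := thue_morse.

Lemma popE n : 0 < n -> popcount n = odd n + popcount n./2.
Proof.
case: n => [|n] // _; rewrite /popcount /=; congr (_ + _).
apply: pf_fuel => //; by rewrite uphalfE leq_half_double -muln2; lia.
Qed.

Lemma t2 n : t (2 * n) = t n.
Proof.
case: n => [|n] //; rewrite /t mul2n popE; last by rewrite double_gt0.
by rewrite odd_double doubleK.
Qed.

Lemma t2S n : t (2 * n + 1) = ~~ t n.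
Proof.
rewrite /t mul2n addn1 popE // /= odd_double uphalf_double.
by [].
Qed.

Lemma parity n : exists b, n = 2 * b \/ n = 2 * b + 1.
Proof.
exists n./2; have := odd_double_half n; rewrite -muln2; case: odd => /= H; lia.
Qed.

Lemma no3 n : t n = t (n + 1) -> t (n + 1) = t (n + 2) -> False.
Proof.
have [b [->|->]] := parity n.
- by rewrite t2S t2; case: t.
- rewrite (_ : 2 * b + 1 + 1 = 2 * (b+1)) ?t2; last lia.
  rewrite (_ : 2 * b + 1 + 2 = 2 * (b+1) + 1) ?t2S; last lia.
  by move=> _; case: (t (b+1)).
Qed.

Lemma window n k : t (2*n) = t (2*n+2*k+1) -> t (2*n+1) = t (2*n+2*k+2) ->
  t (2*n+2) = t (2*n+2*k+3) -> t (2*n+3) = t (2*n+2*k+4) -> False.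
Proof.
set m := n + k.
rewrite (_ : 2*n+2*k+1 = 2*m+1); last lia.
rewrite (_ : 2*n+2*k+2 = 2*(m+1)); last lia.
rewrite (_ : 2*n+2*k+3 = 2*(m+1)+1); last lia.
rewrite (_ : 2*n+2*k+4 = 2*(m+2)); last lia.
rewrite (_ : 2*n+2 = 2*(n+1)); last lia.
rewrite (_ : 2*n+3 = 2*(n+1)+1); last lia.
rewrite !t2 !t2S => h1 h2 h3 h4.
apply: (no3 m).
- by rewrite -h2 h1 negbK.
- by rewrite -h4 h3 negbK.
Qed.

Lemma overlap_free p a : 0 < p -> (forall i, i <= p -> t (a + i) = t (a + p + i)) -> False.
Proof.
elim/ltn_ind: p a => p IH a Hp H.
have [k [Ep|Ep]] := parity p.
-
  have Hk : 0 < k by lia.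
  have [b Ea] := parity a.
  apply: (IH k _ b Hk) => [|j Hj]; first lia.
  have := H (2*j) ltac:(lia).
  case: Ea => ->.
  + rewrite (_ : 2*b + 2*j = 2*(b+j)); last lia.
    rewrite (_ : 2*b + p + 2*j = 2*(b+k+j)); last lia.
    by rewrite !t2.
  + rewrite (_ : 2*b+1 + 2*j = 2*(b+j)+1); last lia.
    rewrite (_ : 2*b+1 + p + 2*j = 2*(b+k+j)+1); last lia.
    by rewrite !t2S => /(congr1 negb); rewrite !negbK.
-
  have T : forall x y i, i <= p -> x = a + i -> y = a + p + i -> t x = t y.
    by move=> x y i Hi -> ->; apply: H.
  have [b [Ea|Ea]] := parity a.
  + case: (ltnP k 1) => Hk.
    * apply: (no3 a); [apply: (T _ _ 0) | apply: (T _ _ 1)]; lia.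
    * apply: (window b k);
        [apply: (T _ _ 0) | apply: (T _ _ 1) | apply: (T _ _ 2) | apply: (T _ _ 3)]; lia.
  + case: (ltnP k 2) => Hk.
    * case: (ltnP k 1) => Hk1.
      -- apply: (no3 a); [apply: (T _ _ 0) | apply: (T _ _ 1)]; lia.
      --
         have e0 : t (2*b+1) = t (2*(b+2)) by apply: (T _ _ 0); lia.
         have e3 : t (2*(b+2)) = t (2*(b+3)+1) by apply: (T _ _ 3); lia.
         have e1 : t (2*(b+1)) = t (2*(b+2)+1) by apply: (T _ _ 1); lia.
         have e2 : t (2*(b+1)+1) = t (2*(b+3)) by apply: (T _ _ 2); lia.
         move: e0 e1 e2 e3; rewrite !t2 !t2S.
         by case: (t b); case: (t (b+1)); case: (t (b+2)); case: (t (b+3)).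
    * apply: (window (b+1) k);
        [apply: (T _ _ 1) | apply: (T _ _ 2) | apply: (T _ _ 3) | apply: (T _ _ 4)]; lia.
Qed.

Theorem theorem3 : frameless (fun i j => thue_morse (i + j)).
Proof.
move=> [m [n [p [q [Hp [Hq [H1 H2]]]]]]].
case: (leqP p q) => Hpq.
- apply: (@overlap_free p (m+n) Hp) => i Hi.
  have := H1 i (leq_trans Hi Hpq).
  by rewrite !addnA (addnAC m p n).
- apply: (@overlap_free q (m+n) Hq) => i Hi.
  have := H2 i (leq_trans Hi (ltnW Hpq)).
  by rewrite (addnAC m i n) (addnAC m i (n+q)) !addnA.
Qed.
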